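(* Let $(Q,\cdot)$ be a quasigroup. Then each of the following three identities holds in $Q$ (for all $x,y,z\in Q$) if and only if $Q$ satisfies the left alternative law $x(xy)=(xx)y$ for all $x,y\in Q$: (A13) $x(x(yz))=(xx)(yz)$; (A45) $(x(xy))z=((xx)y)z$; (C12) $x(y(yz))=x((yy)z)$.
   Context: A quasigroup is a set $Q$ with a binary operation $\cdot$ (written as juxtaposition) such that for all $a,b\in Q$ each of the equations $ax=b$ and $ya=b$ has a unique solution in $Q$. *)

(* Defs.v *)
Definition is_quasigroup (Q : Type) (mul : Q -> Q -> Q) : Prop :=
  forall a b : Q,
    (exists! x : Q, mul a x = b) /\ (exists! y : Q, mul y a = b).

Definition left_alternative (Q : Type) (mul : Q -> Q -> Q) : Prop :=
  forall x y : Q, mul x (mul x y) = mul (mul x x) y.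

Definition identity_A13 (Q : Type) (mul : Q -> Q -> Q) : Prop :=
  forall x y z : Q, mul x (mul x (mul y z)) = mul (mul x x) (mul y z).

Definition identity_A45 (Q : Type) (mul : Q -> Q -> Q) : Prop :=
  forall x y z : Q, mul (mul x (mul x y)) z = mul (mul (mul x x) y) z.

Definition identity_C12 (Q : Type) (mul : Q -> Q -> Q) : Prop :=
  forall x y z : Q, mul x (mul y (mul y z)) = mul x (mul (mul y y) z).

(* Main.v *)
Require Import Defs.

Theorem mainTheorem3 (Q : Type) (mul : Q -> Q -> Q) (HQ : is_quasigroup Q mul) :
  (identity_A13 Q mul <-> left_alternative Q mul) /\
  (identity_A45 Q mul <-> left_alternative Q mul) /\
  (identity_C12 Q mul <-> left_alternative Q mul).
Proof.
  unfold identity_A13, identity_A45, identity_C12, left_alternative.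
  assert (rc : forall u v z, mul u z = mul v z -> u = v).
  { intros u v z H. destruct (HQ z (mul u z)) as [_ [w [_ Hw]]].
    transitivity w; [symmetry|]; apply Hw; auto. }
  assert (lc : forall x u v, mul x u = mul x v -> u = v).
  { intros x u v H. destruct (HQ x (mul x u)) as [[w [_ Hw]] _].
    transitivity w; [symmetry|]; apply Hw; auto. }
  split; [|split]; split; intros H.
  - intros x y. destruct (HQ y y) as [_ [w [Hw _]]].
    rewrite <- Hw. apply H.
  - intros x y z. apply H.
  - intros x y. apply (rc _ _ x). apply H.
  - intros x y z. rewrite H. reflexivity.
  - intros x y. apply (lc x). apply H.
  - intros x y z. rewrite H. reflexivity.
Qed.
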